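(* Let $G$ be a graph and let $v$ be a cut vertex of $G$ which decomposes $G$ into $G_1=G(V_1)$ and $H=G(U)$, where $H$ is a cycle. Let $f$ be a divisor on $G$. If $f_{N(H)}$ is bad, then $\rho_G(f)=\rho_{G_1}(f_{G/H}-\epsilon_v)$.
   Context: Graphs are finite, undirected, connected, loopless, possibly with multiple edges; $G(W)$ is the induced subgraph on $W$. A cycle is a connected graph with at least two vertices, all of degree $2$. A vertex $v$ is a cut vertex if removing it disconnects $G$; it decomposes $G$ into $G_1=G(V_1)$ and $H=G(U)$ if $V(G)=V_1\cup U$, $V_1\cap U=\{v\}$, both induced subgraphs are connected, and no edge joins $V_1\setminus\{v\}$ to $U\setminus\{v\}$. A divisor is a function $V\to\mathbb{Z}$, $\deg(f)=\sum f(u)$; $\epsilon_v$ is the divisor with value $1$ at $v$ and $0$ elsewhere. Contraction: $f_{G/H}$ is the divisor on $G_1$ with $f_{G/H}(u)=f(u)$ for $u\in V_1\setminus\{v\}$, $f_{G/H}(v)=\sum_{u\in U}f(u)$. Zero: $f_{N(H)}$ is the divisor on $H$ with $f_{N(H)}(u)=f(u)$ for $u\in U\setminus\{v\}$ and $f_{N(H)}(v)=-\sum_{u\in U\setminus\{v\}}f(u)$ (so $\deg f_{N(H)}=0$). Laplacian $\Delta_X(u,u)=\deg(u)$, $\Delta_X(u,w)=-e(u,w)$ for $u\ne w$; $f\sim g$ on $X$ if $g=f+x\Delta_X$, $x$ integral. Effective: all values $\ge0$; L-effective: equivalent to an effective divisor. A degree-$0$ divisor on the cycle $H$ is good if it is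 L-effective on $H$, bad otherwise. The rank $\rho_X(f)$ on a graph $X$ is $-1$ if $f$ is not L-effective on $X$, otherwise the largest $r\ge0$ with $f-\lambda$ L-effective on $X$ for all effective $\lambda$ of degree $r$ on $X$. *)

(* Defs.v *)
From mathcomp Require Import all_boot all_order all_algebra.
Set Implicit Arguments. Unset Strict Implicit. Unset Printing Implicit Defensive.
Import Order.TTheory GRing.Theory Num.Theory.
Local Open Scope ring_scope.

(* A finite multigraph on the vertex type V is given by an edge-multiplicity
   function e : V -> V -> nat (e u w = number of edges joining u and w).
   Induced subgraphs G(W) are represented by the vertex subset W : {set V};
   a divisor on G(W) is a function V -> int of which only the values on W
   matter. *)

Definition multigraph (V : finType) (e : V -> V -> nat) : Prop :=
  (forall u w, e u w = e w u) /\ (forall u, e u u = 0%N).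

Definition adjW (V : finType) (e : V -> V -> nat) (W : {set V}) : rel V :=
  fun x y => [&& x \in W, y \in W & (0 < e x y)%N].

Definition connectedW (V : finType) (e : V -> V -> nat) (W : {set V}) : Prop :=
  W != set0 /\ forall x y, x \in W -> y \in W -> connect (adjW e W) x y.

Definition degW (V : finType) (e : V -> V -> nat) (W : {set V}) (u : V) : nat :=
  (\sum_(w in W) e u w)%N.

Definition is_cycleW (V : finType) (e : V -> V -> nat) (W : {set V}) : Prop :=
  [/\ connectedW e W, (2 <= #|W|)%N & forall u, u \in W -> degW e W u = 2%N].

Definition cut_vertex (V : finType) (e : V -> V -> nat) (v : V) : Prop :=
  ~ connectedW e [set~ v].

Definition decomposes (V : finType) (e : V -> V -> nat) (v : V)
  (V1 U : {set V}) : Prop :=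
  [/\ V1 :|: U = [set: V], V1 :&: U = [set v],
      connectedW e V1, connectedW e U &
      forall x y, x \in V1 :\ v -> y \in U :\ v -> e x y = 0%N].

Definition divisor (V : finType) := V -> int.

Definition deg_div (V : finType) (W : {set V}) (f : divisor V) : int :=
  \sum_(u in W) f u.

Definition eps (V : finType) (v : V) : divisor V := fun u => (u == v)%:Z.

Definition sub_div (V : finType) (f g : divisor V) : divisor V :=
  fun u => f u - g u.

Definition lapW (V : finType) (e : V -> V -> nat) (W : {set V})
  (x : V -> int) (u : V) : int :=
  x u * (degW e W u)%:Z - \sum_(w in W | w != u) x w * (e w u)%:Z.

Definition equivW (V : finType) (e : V -> V -> nat) (W : {set V})
  (f g : divisor V) : Prop :=
  exists x : V -> int, forall u, u \in W -> g u = f u + lapW e W x u.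

Definition effectiveW (V : finType) (W : {set V}) (f : divisor V) : Prop :=
  forall u, u \in W -> 0 <= f u.

Definition L_effective (V : finType) (e : V -> V -> nat) (W : {set V})
  (f : divisor V) : Prop :=
  exists g, equivW e W f g /\ effectiveW W g.

Definition rank_ok (V : finType) (e : V -> V -> nat) (W : {set V})
  (f : divisor V) (r : int) : Prop :=
  forall lam : divisor V, effectiveW W lam -> deg_div W lam = r ->
    L_effective e W (sub_div f lam).

Definition is_rank (V : finType) (e : V -> V -> nat) (W : {set V})
  (f : divisor V) (r : int) : Prop :=
  (~ L_effective e W f /\ r = -1)
  \/ (L_effective e W f /\ 0 <= r /\ rank_ok e W f r /\
      forall r', 0 <= r' -> rank_ok e W f r' -> r' <= r).

Definition contr_div (V : finType) (v : V) (U : {set V}) (f : divisor V)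
  : divisor V :=
  fun u => if u == v then \sum_(w in U) f w else f u.

Definition zero_div (V : finType) (v : V) (U : {set V}) (f : divisor V)
  : divisor V :=
  fun u => if u == v then - \sum_(w in U :\ v) f w else f u.

Definition bad (V : finType) (e : V -> V -> nat) (U : {set V})
  (f : divisor V) : Prop := ~ L_effective e U f.

(* Main.v *)
Require Import Defs.
From mathcomp Require Import all_boot all_order all_algebra ring zify.
From Stdlib Require Import Classical.
Import Order.TTheory GRing.Theory Num.Theory.
Set Implicit Arguments. Unset Strict Implicit. Unset Printing Implicit Defensive.
Local Open Scope ring_scope.

Lemma Posz_sum (I : finType) (P : pred I) (F : I -> nat) :
  Posz (\sum_(i | P i) F i)%N = \sum_(i | P i) (F i)%:Z.
Proof. exact: (big_morph Posz PoszD (erefl _)). Qed.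

Lemma lapW_alt (V : finType) (e : V -> V -> nat) (W : {set V}) x u :
  multigraph e ->
  lapW e W x u = \sum_(w in W) (x u - x w) * (e w u)%:Z.
Proof.
move=> [esym e0]; rewrite /lapW /degW Posz_sum big_distrr /=.
symmetry; under eq_bigr => w _ do rewrite mulrBl.
rewrite sumrB; symmetry; congr (_ - _).
  by apply: eq_bigr => w _; rewrite esym.
rewrite [RHS](bigID (pred1 u)) /= [X in X + _]big1 ?add0r //.
by move=> w /andP[_ /eqP ->]; rewrite e0 mulr0.
Qed.

Lemma lapW_ext (V : finType) (e : V -> V -> nat) (W : {set V}) x x' c u :
  multigraph e -> (forall w, w \in W -> x' w = x w + c) -> u \in W ->
  lapW e W x' u = lapW e W x u.
Proof.
move=> me hx uW; rewrite !lapW_alt //; apply: eq_bigr => w wW.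
by rewrite !hx // opprD addrACA subrr addr0.
Qed.

Lemma lapW_sum0 (V : finType) (e : V -> V -> nat) (W : {set V}) x :
  multigraph e -> \sum_(u in W) lapW e W x u = 0.
Proof.
move=> me; have [esym _] := me.
set S := \sum_(u in W) _.
have : S = - S.
  rewrite {1}/S; under eq_bigr => u _ do rewrite lapW_alt //.
  rewrite exchange_big /=.
  rewrite /S -sumrN; apply: eq_bigr => u _; rewrite lapW_alt // -sumrN.
  by apply: eq_bigr => w _; rewrite esym -mulNr opprB.
move/eqP; rewrite -subr_eq0 opprK -mulr2n -mulr_natr mulf_eq0 /= orbF.
by move/eqP.
Qed.

Lemma lapW_add (V : finType) (e : V -> V -> nat) (W : {set V}) x y u :
  lapW e W (fun w => x w + y w) u = lapW e W x u + lapW e W y u.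
Proof.
rewrite /lapW mulrDl -!addrA; congr (_ + _); rewrite addrCA; congr (_ + _).
by rewrite -opprD -big_split /=; congr (- _); apply: eq_bigr => w _; rewrite mulrDl.
Qed.

Lemma lapW_scale (V : finType) (e : V -> V -> nat) (W : {set V}) (k : int) x u :
  lapW e W (fun w => k * x w) u = k * lapW e W x u.
Proof.
rewrite /lapW mulrBr mulr_sumr -mulrA; congr (_ - _).
by apply: eq_bigr => w _; rewrite mulrA.
Qed.

Lemma dec_mem (V : finType) (e : V -> V -> nat) v V1 U u :
  decomposes e v V1 U -> (u \in V1) && (u \in U) = (u == v).
Proof.
case=> _ hI _ _ _; by rewrite -in_setI hI in_set1.
Qed.

Lemma dec_cover (V : finType) (e : V -> V -> nat) v V1 U u :
  decomposes e v V1 U -> (u \in V1) || (u \in U).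
Proof. by case=> hU _ _ _ _; rewrite -in_setU hU in_setT. Qed.

Lemma sum_split1 (V : finType) (e : V -> V -> nat) v V1 U (F : V -> int) :
  decomposes e v V1 U ->
  \sum_(w in [set: V]) F w = \sum_(w in V1) F w + \sum_(w in U :\ v) F w.
Proof.
move=> hd; rewrite -bigU /=.
  apply: eq_bigl => w; rewrite !inE /=.
  have := dec_cover w hd; have := dec_mem w hd.
  by case: (w \in V1); case: (w \in U); case: (w == v).
rewrite disjoint_subset; apply/subsetP => w wV1; rewrite !inE negb_and negbK.
have := dec_mem w hd; rewrite wV1 /= => ->; by case: (w == v).
Qed.

Lemma sum_split2 (V : finType) (e : V -> V -> nat) v V1 U (F : V -> int) :
  decomposes e v V1 U ->
  \sum_(w in [set: V]) F w = \sum_(w in V1 :\ v) F w + \sum_(w in U) F w.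
Proof.
move=> hd; rewrite -bigU /=.
  apply: eq_bigl => w; rewrite !inE /=.
  have := dec_cover w hd; have := dec_mem w hd.
  by case: (w \in V1); case: (w \in U); case: (w == v).
rewrite disjoint_subset; apply/subsetP => w; rewrite !inE => /andP[wv wV1].
by have := dec_mem w hd; rewrite wV1 (negbTE wv) /= => ->.
Qed.

Lemma lap_V1 (V : finType) (e : V -> V -> nat) v V1 U x u :
  multigraph e -> decomposes e v V1 U -> u \in V1 -> u != v ->
  lapW e [set: V] x u = lapW e V1 x u.
Proof.
move=> me hd uV1 uv; have [esym _] := me.
rewrite !lapW_alt // (sum_split1 _ hd) [X in _ + X]big1 ?addr0 //.
move=> w wU; rewrite esym; have [_ _ _ _ sep] := hd.
by rewrite sep ?mulr0 // !inE ?uv ?uV1 ?uU.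
Qed.

Lemma lap_U (V : finType) (e : V -> V -> nat) v V1 U x u :
  multigraph e -> decomposes e v V1 U -> u \in U -> u != v ->
  lapW e [set: V] x u = lapW e U x u.
Proof.
move=> me hd uU uv; have [esym _] := me.
rewrite !lapW_alt // (sum_split2 _ hd) [X in X + _]big1 ?add0r //.
move=> w wV1; have [_ _ _ _ sep] := hd.
by rewrite sep ?mulr0 // !inE ?uv ?uV1 ?uU.
Qed.

Lemma lap_v (V : finType) (e : V -> V -> nat) v V1 U x :
  multigraph e -> decomposes e v V1 U ->
  lapW e [set: V] x v = lapW e V1 x v + lapW e U x v.
Proof.
move=> me hd; have vU : v \in U by have := dec_mem v hd; rewrite eqxx => /andP[].
rewrite !lapW_alt // (sum_split1 _ hd) [X in _ = _ + X](big_setD1 _ vU) /=.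
by rewrite subrr mul0r add0r.
Qed.

Lemma key_B (V : finType) (e : V -> V -> nat) v V1 U (g : divisor V) :
  multigraph e -> decomposes e v V1 U -> bad e U (zero_div v U g) ->
  L_effective e [set: V] g ->
  L_effective e V1 (sub_div (contr_div v U g) (eps v)).
Proof.
move=> me hd hbad [g' [[x hx] heff]].
have vU : v \in U by have := dec_mem v hd; rewrite eqxx => /andP[].
have vV1 : v \in V1 by have := dec_mem v hd; rewrite eqxx => /andP[].
have hxU : forall u, u \in U :\ v -> g' u = g u + lapW e U x u.
  move=> u; rewrite !inE => /andP[uv uU].
  by rewrite hx ?inE // (lap_U _ me hd).
set d := \sum_(w in U :\ v) g' w.
have d0 : 0 <= d by apply: sumr_ge0 => w _; apply: heff; rewrite inE.
have dform : d = \sum_(w in U :\ v) g w - lapW e U x v.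
  rewrite /d (eq_bigr _ hxU) big_split /=; congr (_ + _).
  apply/eqP; rewrite -subr_eq0 opprK addrC.
  by rewrite -(big_setD1 _ vU) /= lapW_sum0.
have [dz|dnz] := eqVneq d 0.
  exfalso; apply: hbad; exists (fun _ => 0); split; last by move=> u _.
  exists x => u uU; rewrite /zero_div; case: eqP => [->|/eqP uv].
    by move: dz; rewrite dform => dz; apply/esym/eqP; rewrite -oppr_eq0 opprD opprK dz.
  have hU' : u \in U :\ v by rewrite !inE uv.
  rewrite -hxU //; symmetry; apply: (psumr_eq0P _ dz) => // w _.
  by apply: heff; rewrite inE.
have d1 : 1 <= d by rewrite -gtz0_ge1 lt_def dnz d0.
exists (fun u => sub_div (contr_div v U g) (eps v) u + lapW e V1 x u).
split; first by exists x.
move=> u uV1; rewrite /sub_div /contr_div /eps; case: eqP => [->|/eqP uv].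
  have := heff v (in_setT v); rewrite hx ?inE // (lap_v _ me hd) => h.
  set T := (X in 0 <= X).
  have -> : T = g v + (lapW e V1 x v + lapW e U x v) + (d - 1).
    rewrite /T (big_setD1 _ vU) dform /=; ring.
  by apply: addr_ge0 => //; rewrite subr_ge0.
set T := (X in 0 <= X).
have -> : T = g' u by rewrite /T hx ?inE // (lap_V1 _ me hd) //= subr0.
by apply: heff; rewrite inE.
Qed.

Lemma key_A (V : finType) (e : V -> V -> nat) v V1 U (g : divisor V) :
  multigraph e -> decomposes e v V1 U ->
  (forall b : divisor V, deg_div U b = 1 -> L_effective e U b) ->
  L_effective e V1 (sub_div (contr_div v U g) (eps v)) ->
  L_effective e [set: V] g.
Proof.
move=> me hd hcyc [a' [[y hy] heff]].
have vU : v \in U by have := dec_mem v hd; rewrite eqxx => /andP[].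
have vV1 : v \in V1 by have := dec_mem v hd; rewrite eqxx => /andP[].
pose b : divisor V := fun u => if u == v then 1 - \sum_(w in U :\ v) g w else g u.
have [b' [[z hz] beff]] : L_effective e U b.
  apply: hcyc; rewrite /deg_div (big_setD1 _ vU) /= /b eqxx.
  rewrite (eq_bigr g); first by rewrite subrK.
  by move=> w; rewrite !inE => /andP[/negbTE -> _].
pose x := fun u => if u \in V1 then y u else z u + (y v - z v).
have lx1 : forall u, u \in V1 -> lapW e V1 x u = lapW e V1 y u.
  move=> u uV1; apply: (lapW_ext (c := 0)) => // w wV1.
  by rewrite /x wV1 addr0.
have lx2 : forall u, u \in U -> lapW e U x u = lapW e U z u.
  move=> u uU; apply: (lapW_ext (c := y v - z v)) => // w wU.
  rewrite /x; case: ifP => // wV1.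
  have := dec_mem w hd; rewrite wV1 wU /= => /esym/eqP ->; by rewrite addrCA subrr addr0.
exists (fun u => g u + lapW e [set: V] x u); split; first by exists x.
move=> u _; have [/eqP ->|uv] := boolP (u == v).
  rewrite (lap_v _ me hd) lx1 // lx2 //.
  have h1 := heff v vV1; rewrite hy // in h1.
  have h2 := beff v vU; rewrite hz // in h2.
  move: h1 h2; rewrite /sub_div /contr_div /eps /b eqxx (big_setD1 _ vU) /=.
  set A := lapW e V1 y v; set B := lapW e U z v; set S := \sum_(i in U :\ v) g i.
  move=> h1 h2.
  have -> : g v + (A + B) = (g v + S - 1 + A) + (1 - S + B) by ring.
  exact: addr_ge0.
have [uV1|uV1] := boolP (u \in V1).
  rewrite (lap_V1 _ me hd) // lx1 //.
  have h1 := heff u uV1; rewrite hy // in h1.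
  by move: h1; rewrite /sub_div /contr_div /eps (negbTE uv) /= subr0.
have uU : u \in U by have := dec_cover u hd; rewrite (negbTE uV1).
rewrite (lap_U _ me hd) // lx2 //.
have h2 := beff u uU; rewrite hz // in h2.
by move: h2; rewrite /b (negbTE uv).
Qed.

Definition prin (V : finType) (e : V -> V -> nat) (W : {set V}) (h : divisor V) :=
  exists x, forall u, u \in W -> h u = lapW e W x u.

Lemma prin_ext (V : finType) (e : V -> V -> nat) (W : {set V}) (h h' : divisor V) :
  (forall u, u \in W -> h u = h' u) -> prin e W h -> prin e W h'.
Proof. by move=> hh [x hx]; exists x => u uW; rewrite -hh // hx. Qed.

Lemma prin_add (V : finType) (e : V -> V -> nat) (W : {set V}) (h h' : divisor V) :
  prin e W h -> prin e W h' -> prin e W (fun u => h u + h' u).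
Proof.
by move=> [x hx] [y hy]; exists (fun w => x w + y w) => u uW; rewrite lapW_add -hx -?hy.
Qed.

Lemma prin_scale (V : finType) (e : V -> V -> nat) (W : {set V}) (k : int) (h : divisor V) :
  prin e W h -> prin e W (fun u => k * h u).
Proof.
by move=> [x hx]; exists (fun w => k * x w) => u uW; rewrite lapW_scale -hx.
Qed.

Lemma prin0 (V : finType) (e : V -> V -> nat) (W : {set V}) :
  prin e W (fun _ => 0).
Proof.
exists (fun _ => 0) => u _; rewrite /lapW mul0r big1 ?subr0 //.
Qed.

Lemma prin_sum (V : finType) (e : V -> V -> nat) (W : {set V}) (m : nat)
  (F : nat -> divisor V) :
  (forall i, (i < m)%N -> prin e W (F i)) ->
  prin e W (fun u => \sum_(i < m) F i u).
Proof.
elim: m => [|m IH] hF.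
  by apply: prin_ext (prin0 e W) => u _; rewrite big_ord0.
apply: prin_ext (prin_add (IH _) (hF m _)) => //.
  by move=> u _; rewrite big_ord_recr.
by move=> i /ltnW; apply: hF.
Qed.

Definition nx (n i : nat) := if i.+1 == n then 0%N else i.+1.
Definition pv (n i : nat) := if i == 0%N then n.-1 else i.-1.

Lemma nx_lt n i : (i < n)%N -> (nx n i < n)%N.
Proof. by rewrite /nx; case: eqP => [_|/eqP h] hi; [apply: leq_ltn_trans hi | rewrite ltn_neqAle h hi]. Qed.

Lemma pv_lt n i : (i < n)%N -> (pv n i < n)%N.
Proof. by rewrite /pv; case: i => [|i] /= hi; [rewrite prednK | apply: ltnW]. Qed.

Lemma nx_neq n i : (2 <= n)%N -> (i < n)%N -> nx n i != i.
Proof. rewrite /nx => n2 hi; case: (i.+1 =P n) => h; apply/eqP; lia. Qed.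

Lemma pv_neq n i : (2 <= n)%N -> (i < n)%N -> pv n i != i.
Proof. rewrite /pv => n2 hi; case: (i =P 0%N) => h; apply/eqP; lia. Qed.

Lemma nx_S n i : (i.+1 < n)%N -> nx n i = i.+1.
Proof. by rewrite /nx => h; rewrite (ltn_eqF h). Qed.

Lemma pv_S n i : pv n i.+1 = i.
Proof. by []. Qed.

Lemma nx_last n : (0 < n)%N -> nx n n.-1 = 0%N.
Proof. by rewrite /nx => h; rewrite prednK // eqxx. Qed.

Lemma cycle_alg (V : finType) (e : V -> V -> nat) (W : {set V}) (n : nat) (c : nat -> V) :
  multigraph e -> (2 <= n)%N ->
  (forall i, (i < n)%N -> c i \in W) ->
  (forall w, w \in W -> exists2 i, (i < n)%N & c i = w) ->
  (forall i j, (i < n)%N -> (j < n)%N -> c i = c j -> i = j) ->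
  (forall u, u \in W -> degW e W u = 2%N) ->
  (forall i, (i < n)%N -> forall w, w \in W -> w != c i ->
      e (c i) w = ((w == c (nx n i)) + (w == c (pv n i)))%N) ->
  forall b : divisor V, deg_div W b = 1 -> L_effective e W b.
Proof.
move=> me n2 cW csurj cinj hdeg hedge b hb.
have [esym e0] := me.
have n0 : (0 < n)%N by apply: leq_trans n2.
pose E i : divisor V := eps (c i).
have cneq : forall i j, (i < n)%N -> (j < n)%N -> i != j -> c i != c j.
  move=> i j hi hj; apply: contra => /eqP h; apply/eqP; exact: cinj.
have hA : forall j, (j < n)%N ->
    prin e W (fun u => 2 * E j u - E (nx n j) u - E (pv n j) u).
  move=> j hj; exists (fun w => (w == c j)%:Z) => u uW.
  rewrite /lapW /E /eps.
  have [->|ucj] := eqVneq u (c j).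
    rewrite hdeg ?cW // big1; last first.
      by move=> w /andP[_ /negbTE ->]; rewrite mul0r.
    rewrite (negbTE (cneq _ _ hj (nx_lt hj) _)); last by rewrite eq_sym nx_neq.
    rewrite (negbTE (cneq _ _ hj (pv_lt hj) _)); last by rewrite eq_sym pv_neq.
    by [].
  rewrite (bigD1 (c j)) /=; last by rewrite cW // eq_sym ucj.
  rewrite eqxx big1; last by move=> w /andP[_ /negbTE ->]; rewrite mul0r.
  rewrite hedge // 1?eq_sym // PoszD /=; ring.
pose D i : divisor V := fun u => E i u - E (nx n i) u.
have hB : forall i, (i.+1 < n)%N -> prin e W (fun u => D i.+1 u - D i u).
  move=> i hi; apply: prin_ext (hA _ hi) => u _.
  by rewrite /D pv_S (nx_S hi); ring.
have hC : forall i, (i < n)%N -> prin e W (fun u => D i u - D 0%N u).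
  elim=> [|i IH] hi.
    by apply: prin_ext (prin0 e W) => u _; ring.
  apply: prin_ext (prin_add (IH (ltnW hi)) (hB i hi)) => u _; ring.
have hDp : forall i, (i < n)%N ->
    prin e W (fun u => E 0%N u - i%:Z * D 0%N u - E i u).
  elim=> [|i IH] hi.
    by apply: prin_ext (prin0 e W) => u _; ring.
  apply: prin_ext (prin_add (IH (ltnW hi)) (hC i (ltnW hi))) => u _.
  rewrite /D (nx_S hi) -addn1 PoszD; ring.
have hN : prin e W (fun u => n%:Z * D 0%N u).
  have hn1 : (n.-1 < n)%N by rewrite prednK.
  apply: prin_ext (prin_scale (-1) (prin_add (hDp _ hn1) (hC _ hn1))) => u _.
  rewrite /D (nx_last n0).
  have -> : Posz n = (n.-1)%:Z + 1 by rewrite -[1]/(Posz 1) -PoszD addn1 prednK.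
  ring.
have hsumE : forall u, u \in W -> \sum_(i < n) b (c i) * E i u = b u.
  move=> u uW; have [i0 hi0 <-] := csurj u uW.
  rewrite (bigD1 (Ordinal hi0)) //= big1; first by rewrite /E /eps eqxx mulr1 addr0.
  move=> j hj; rewrite /E /eps.
  have : c j != c i0.
    by apply: cneq => //; exact: hj.
  by rewrite eq_sym => /negbTE ->; rewrite mulr0.
have hdeg1 : \sum_(i < n) b (c i) = 1.
  rewrite -hb /deg_div -(eq_bigr _ hsumE) exchange_big /=.
  apply: eq_bigr => i _; rewrite -mulr_sumr (bigD1 (c i)) ?cW //= /E /eps eqxx.
  rewrite big1 ?addr0 ?mulr1 // => w /andP[_ /negbTE ->] //.
set K := \sum_(i < n) b (c i) * (i : nat)%:Z.
have hE : prin e W (fun u => E 0%N u - K * D 0%N u - b u).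
  have := @prin_sum V e W n (fun i u => b (c i) * (E 0%N u - i%:Z * D 0%N u - E i u))
    (fun i hi => prin_scale _ (hDp i hi)).
  apply: prin_ext => u uW; rewrite -(hsumE u uW) /K.
  rewrite -[in RHS](mul1r (E 0%N u)) -[in RHS]hdeg1.
  rewrite !mulr_suml -!sumrB; apply: eq_bigr => i _; ring.
have nz : (n%:Z != 0) by rewrite eqz_nat -lt0n.
have npos : 0 < n%:Z by rewrite ltz_nat.
pose q := (K %/ n%:Z)%Z; pose m := (K %% n%:Z)%Z.
have m0 : 0 <= m := modz_ge0 K nz.
have mlt : m < n%:Z := ltz_pmod K npos.
pose m' := `|m|%N.
have hm : m'%:Z = m by rewrite /m' gez0_abs.
have m'n : (m' < n)%N by rewrite -ltz_nat hm.
have hF : prin e W (fun u => E m' u - b u).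
  apply: prin_ext (prin_add (prin_add hE (prin_scale q hN))
     (prin_scale (-1) (hDp m' m'n))) => u _.
  have hK : K = q * n%:Z + m := divz_eq K n%:Z.
  rewrite hK hm; ring.
have [x hx] := hF; exists (E m'); split.
  by exists x => u uW; rewrite -hx //; ring.
by move=> u _; rewrite /E /eps.
Qed.

Lemma deg_split2 (V : finType) (e : V -> V -> nat) (W : {set V}) u a b :
  a \in W -> b \in W -> a != b ->
  degW e W u = (e u a + e u b + \sum_(w in W | (w != a) && (w != b)) e u w)%N.
Proof.
move=> aW bW ab; rewrite /degW (bigD1 a) //= (bigD1 b) /=; last by rewrite bW eq_sym.
rewrite addnA; congr (_ + _)%N; apply: eq_bigl => w.
by rewrite andbA.
Qed.

Lemma L_two (V : finType) (e : V -> V -> nat) (W : {set V}) u a b :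
  multigraph e -> degW e W u = 2%N ->
  a \in W -> b \in W -> a != b -> (0 < e u a)%N -> (0 < e u b)%N ->
  forall w, w \in W -> e u w = ((w == a) + (w == b))%N.
Proof.
move=> me hd aW bW ab ha hb w wW.
move: hd; rewrite (deg_split2 _ _ aW bW ab) => hd.
have hr : (\sum_(w in W | (w != a) && (w != b)) e u w == 0)%N by lia.
have ea : e u a = 1%N by lia.
have eb : e u b = 1%N by lia.
have [->|wa] := eqVneq w a; first by rewrite ea (negbTE ab).
have [->|wb] := eqVneq w b; first by rewrite eb.
move: hr; rewrite sum_nat_eq0 => /forallP /(_ w) /implyP; rewrite wW wa wb.
by move=> /(_ isT) /eqP.
Qed.

Lemma L_double (V : finType) (e : V -> V -> nat) (W : {set V}) u a :
  degW e W u = 2%N -> a \in W -> (2 <= e u a)%N ->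
  forall w, w \in W -> e u w = ((w == a) + (w == a))%N.
Proof.
move=> hd aW ha w wW; move: hd; rewrite /degW (bigD1 a) //= => hd.
have hr : (\sum_(i in W | i != a) e u i == 0)%N by lia.
have [->|wa] := eqVneq w a; first by rewrite ?eqxx; lia.
move: hr; rewrite sum_nat_eq0 => /forallP /(_ w) /implyP; rewrite wW wa.
by move=> /(_ isT) /eqP.
Qed.

Lemma L_other (V : finType) (e : V -> V -> nat) (W : {set V}) u a :
  degW e W u = 2%N -> a \in W -> (e u a < 2)%N ->
  exists t, [/\ t \in W, t != a & (0 < e u t)%N].
Proof.
move=> hd aW ha; move: hd; rewrite /degW (bigD1 a) //= => hd.
case: (pickP (fun t => [&& t \in W, t != a & (0 < e u t)%N])) => [t /and3P[]|h].
  by move=> *; exists t.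
have : (\sum_(i in W | i != a) e u i == 0)%N.
  rewrite sum_nat_eq0; apply/forallP => w; apply/implyP => /andP[wW wa].
  by have := h w; rewrite wW wa /= lt0n => /negbT; rewrite negbK.
lia.
Qed.

Lemma L_exists (V : finType) (e : V -> V -> nat) (W : {set V}) u :
  degW e W u = 2%N -> exists2 t, t \in W & (0 < e u t)%N.
Proof.
move=> hd.
case: (pickP (fun t => (t \in W) && (0 < e u t)%N)) => [t /andP[]|h].
  by move=> *; exists t.
have : (\sum_(i in W) e u i == 0)%N.
  rewrite sum_nat_eq0; apply/forallP => w; apply/implyP => wW.
  by have := h w; rewrite wW /= lt0n => /negbT; rewrite negbK.
rewrite /degW in hd; lia.
Qed.

Definition pathP (V : finType) (e : V -> V -> nat) (W : {set V}) k (c : nat -> V) :=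
  [/\ (forall i, (i < k)%N -> c i \in W),
      (forall i j, (i < k)%N -> (j < k)%N -> c i = c j -> i = j) &
      (forall i, (i.+1 < k)%N -> (0 < e (c i) (c i.+1))%N)].

Lemma path_bound (V : finType) (e : V -> V -> nat) (W : {set V}) k c :
  pathP e W k c -> (k <= #|W|)%N.
Proof.
case=> cW cinj _.
have inj : injective (fun i : 'I_k => c i).
  by move=> i j h; apply: val_inj; exact: (cinj _ _ (ltn_ord i) (ltn_ord j) h).
have := card_imset (mem 'I_k) inj; rewrite card_ord => <-.
apply: subset_leq_card; apply/subsetP => w /imsetP[i _ ->]; exact: cW.
Qed.

Lemma path_ext (V : finType) (e : V -> V -> nat) (W : {set V}) k c t :
  pathP e W k c -> t \in W -> (forall i, (i < k)%N -> c i != t) ->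
  (k = 0%N \/ (0 < e (c k.-1) t)%N) ->
  pathP e W k.+1 (fun i => if i == k then t else c i).
Proof.
case=> cW cinj cadj tW tnew hk; split.
- move=> i hi; case: eqP => // /eqP ik; apply: cW; lia.
- move=> i j hi hj; case: (i =P k) => ik; case: (j =P k) => jk.
  + by rewrite ik jk.
  + move=> h; have := tnew j; rewrite h eqxx; move=> /(_ _)/negP; lia.
  + move=> h; have := tnew i; rewrite h eqxx; move=> /(_ _)/negP; lia.
  + by apply: cinj; lia.
- move=> i hi; case: (i.+1 =P k) => ik.
  + have -> : (i == k) = false by apply/eqP; lia.
    case: hk => [k0|hk]; first lia.
    by move: hk; rewrite -ik.
  + have -> : (i == k) = false by apply/eqP; lia.
    by apply: cadj; lia.
Qed.

Lemma max_path (V : finType) (e : V -> V -> nat) (W : {set V}) (c0 : V) :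
  exists k c, pathP e W k c /\ forall c', ~ pathP e W k.+1 c'.
Proof.
apply: NNPP => H.
have all_k : forall k, exists c, pathP e W k c.
  elim=> [|k [c hc]].
    by exists (fun _ => c0); split.
  apply: NNPP => hn; apply: H; exists k, c; split => // c' hc'.
  by apply: hn; exists c'.
have [c hc] := all_k #|W|.+1.
by have := path_bound hc; rewrite ltnn.
Qed.

Lemma nx_pv n i : (3 <= n)%N -> (i < n)%N -> nx n i != pv n i.
Proof.
rewrite /nx /pv => n3 hi; case: (i.+1 =P n) => h1; case: (i =P 0%N) => h2; apply/eqP; lia.
Qed.

Lemma surj_from_edge (V : finType) (e : V -> V -> nat) (W : {set V}) n c :
  multigraph e -> connectedW e W -> (0 < n)%N ->
  (forall i, (i < n)%N -> c i \in W) ->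
  (forall i, (i < n)%N -> forall w, w \in W -> w != c i ->
      e (c i) w = ((w == c (nx n i)) + (w == c (pv n i)))%N) ->
  forall w, w \in W -> exists2 i, (i < n)%N & c i = w.
Proof.
move=> [esy e0] [_ conn] n0 cW hedge w wW.
pose S := [pred z | [exists i : 'I_n, c i == z]].
have step : forall x y, adjW e W x y -> x \in S -> y \in S.
  move=> x y /and3P[xW yW exy] /existsP[i /eqP hi]; subst x.
  have yx : y != c i by apply: contraTneq exy => ->; rewrite e0.
  move: exy; rewrite hedge // => h.
  case: (boolP (y == c (nx n i))) => [/eqP ->|hn].
    by apply/existsP; exists (Ordinal (nx_lt (ltn_ord i))).
  case: (boolP (y == c (pv n i))) => [/eqP ->|hp].
    by apply/existsP; exists (Ordinal (pv_lt (ltn_ord i))).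
  by move: h; rewrite (negbTE hn) (negbTE hp).
have cl : closed (adjW e W) S.
  move=> x y hxy; apply/idP/idP; first exact: step.
  apply: step; move: hxy => /and3P[xW yW exy].
  by rewrite /adjW xW yW esy.
have := closed_connect cl (conn _ _ (cW 0%N n0) wW).
have -> : (c 0%N \in S) by apply/existsP; exists (Ordinal n0).
by move=> /esym /existsP[i /eqP hi]; exists i.
Qed.

Lemma cycle_order (V : finType) (e : V -> V -> nat) (W : {set V}) :
  multigraph e -> is_cycleW e W ->
  exists n (c : nat -> V), [/\ (2 <= n)%N, (forall i, (i < n)%N -> c i \in W),
    (forall w, w \in W -> exists2 i, (i < n)%N & c i = w),
    (forall i j, (i < n)%N -> (j < n)%N -> c i = c j -> i = j) &
    (forall i, (i < n)%N -> forall w, w \in W -> w != c i ->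
      e (c i) w = ((w == c (nx n i)) + (w == c (pv n i)))%N)].
Proof.
move=> me [[Wne Wconn] W2 hdeg]; have [esy e0] := me.
have [w0 w0W] := set0Pn _ Wne.
have [k [c [[cW cinj cadj] hmax]]] := max_path e W w0.
have nbr : forall t, t \in W -> (0 < k)%N -> (0 < e (c k.-1) t)%N ->
    exists2 j, (j < k)%N & c j = t.
  move=> t tW k0 et; apply: NNPP => hn.
  apply: (hmax _ (path_ext (And3 cW cinj cadj) tW _ (or_intror et))).
  move=> i hi; apply/eqP => hci; apply: hn; by exists i.
have k1 : (0 < k)%N.
  case: k cW cinj cadj hmax nbr => // cW cinj cadj hmax _.
  exfalso; apply: (hmax _ (path_ext (And3 cW cinj cadj) w0W _ (or_introl erefl))).
  by [].
suff hedge : (2 <= k)%N /\ (forall i, (i < k)%N -> forall w, w \in W -> w != c i ->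
      e (c i) w = ((w == c (nx k i)) + (w == c (pv k i)))%N).
  case: hedge => k2 hedge; exists k, c; split => //.
  exact: surj_from_edge me (conj Wne Wconn) k1 cW hedge.
have yW : c k.-1 \in W by apply: cW; lia.
have k2 : (2 <= k)%N.
  have [t tW et] := L_exists (hdeg _ yW).
  have [j hj hjt] := nbr t tW k1 et.
  case: (ltnP 1 k) => // hk.
  have jk : j = k.-1 by lia.
  by move: et; rewrite -hjt jk e0.
have aW : c k.-2 \in W by apply: cW; lia.
have eya : (0 < e (c k.-1) (c k.-2))%N.
  have e1 : k.-2.+1 = k.-1 by lia.
  by have := cadj k.-2; rewrite e1 esy; apply; lia.
case: (leqP 2 (e (c k.-1) (c k.-2))) => hya.
  have hk2 : k = 2%N.
    apply/eqP; rewrite eqn_leq k2 andbT; apply/negP => hk3.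
    have bW : c k.-2.-1 \in W by apply: cW; lia.
    have eab : (0 < e (c k.-2) (c k.-2.-1))%N.
      have e1 : k.-2.-1.+1 = k.-2 by lia.
      by have := cadj k.-2.-1; rewrite e1 esy; apply; lia.
    have := L_double (hdeg _ aW) yW _ bW; rewrite esy => /(_ hya).
    have -> : (c k.-2.-1 == c k.-1) = false.
      by apply/negP => /eqP /cinj h; have := h ltac:(lia) ltac:(lia); lia.
    by move=> h; move: eab; rewrite h.
  subst k; split => // i hi w wW wci.
  have c0W : c 0%N \in W by apply: cW.
  have c1W : c 1%N \in W by apply: cW.
  case: i hi wci => [|[|i]] // _ wci.
    by rewrite (L_double (hdeg _ c0W) c1W) // esy.
  by rewrite (L_double (hdeg _ c1W) c0W).
have [t [tW ta et]] := L_other (hdeg _ yW) aW hya.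
have [j hj hjt] := nbr t tW k1 et.
have jk1 : j != k.-1 by apply/eqP => h; move: et; rewrite -hjt h e0.
have jk2 : j != k.-2 by apply/eqP => h; move: ta; rewrite -hjt h eqxx.
have j0 : j = 0%N.
  case: (posnP j) => [//|jpos]; exfalso.
  have cjW : c j \in W by apply: cW.
  have p1 : (0 < e (c j) (c j.-1))%N.
    have e1 : j.-1.+1 = j by lia.
    by have := cadj j.-1; rewrite e1 esy; apply; lia.
  have p2 : (0 < e (c j) (c j.+1))%N by apply: cadj; lia.
  have d12 : c j.-1 != c j.+1.
    by apply/negP => /eqP /cinj h; have := h ltac:(lia) ltac:(lia); lia.
  have := L_two me (hdeg _ cjW) (cW j.-1 ltac:(lia)) (cW j.+1 ltac:(lia)) d12 p1 p2 yW.
  have -> : (c k.-1 == c j.-1) = false.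
    by apply/negP => /eqP /cinj h; have := h ltac:(lia) ltac:(lia); lia.
  have -> : (c k.-1 == c j.+1) = false.
    by apply/negP => /eqP /cinj h; have := h ltac:(lia) ltac:(lia); lia.
  by rewrite esy hjt => h; move: et; rewrite h.
subst j.
have k3 : (3 <= k)%N by lia.
split => // i hi w wW wci.
apply: (L_two me (hdeg _ (cW _ hi)) (cW _ (nx_lt hi)) (cW _ (pv_lt hi))) => //.
- apply/negP => /eqP /cinj h; have := h (nx_lt hi) (pv_lt hi).
  by apply/eqP; apply: nx_pv.
- case: (ltnP i.+1 k) => h; first by rewrite nx_S //; apply: cadj.
  have -> : i = k.-1 by lia.
  by rewrite nx_last // hjt.
- case: i hi {wci} => [|i] hi.
    by rewrite /pv /= esy hjt.
  by rewrite pv_S esy; apply: cadj.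
Qed.

Lemma Leff_ext (V : finType) (e : V -> V -> nat) (W : {set V}) (D D' : divisor V) :
  (forall u, u \in W -> D u = D' u) -> L_effective e W D -> L_effective e W D'.
Proof.
move=> h [g [[x hx] geff]]; exists g; split => //; exists x => u uW.
by rewrite hx // h.
Qed.

Lemma main_from_cycle (V : finType) (e : V -> V -> nat) (v : V)
  (V1 U : {set V}) (f : divisor V) :
  multigraph e -> decomposes e v V1 U ->
  (forall b : divisor V, deg_div U b = 1 -> L_effective e U b) ->
  bad e U (zero_div v U f) ->
  forall r : int,
    is_rank e [set: V] f r <->
    is_rank e V1 (sub_div (contr_div v U f) (eps v)) r.
Proof.
move=> me hd hcyc hbad.
have vU : v \in U by have := dec_mem v hd; rewrite eqxx => /andP[].
have vV1 : v \in V1 by have := dec_mem v hd; rewrite eqxx => /andP[].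
set f1 := sub_div (contr_div v U f) (eps v).
have hL : L_effective e [set: V] f <-> L_effective e V1 f1.
  by split; [apply: key_B | apply: key_A].
have hR : forall r, rank_ok e [set: V] f r <-> rank_ok e V1 f1 r.
  move=> r; split.
    move=> hok mu mueff mudeg.
    pose lam : divisor V := fun u => if u \in V1 then mu u else 0.
    have lameff : effectiveW [set: V] lam.
      by move=> u _; rewrite /lam; case: ifP => // /mueff.
    have lamdeg : deg_div [set: V] lam = r.
      rewrite -mudeg /deg_div (sum_split1 _ hd) [X in _ + X]big1 ?addr0.
        by apply: eq_bigr => u uV1; rewrite /lam uV1.
      move=> u; rewrite !inE => /andP[uv uU]; rewrite /lam.
      by have := dec_mem u hd; rewrite uU andbT (negbTE uv) => ->.
    have := hok lam lameff lamdeg.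
    have hN : forall u, u \in U :\ v -> sub_div f lam u = f u.
      move=> u; rewrite !inE => /andP[uv uU]; rewrite /sub_div /lam.
      by have := dec_mem u hd; rewrite uU andbT (negbTE uv) => ->; rewrite subr0.
    move=> hL'.
    have hb : bad e U (zero_div v U (sub_div f lam)).
      move=> hb; apply: hbad; apply: Leff_ext hb => u uU.
      rewrite /zero_div; case: eqP => [_|/eqP uv].
        by congr (- _); apply: eq_bigr.
      by apply: hN; rewrite !inE uv.
    move: (key_B me hd hb hL').
    apply: Leff_ext => u uV1; rewrite /f1 /sub_div /contr_div /eps.
    case: eqP => [->|_].
      rewrite (big_setD1 _ vU) [in RHS](big_setD1 _ vU) /= (eq_bigr _ hN).
      rewrite /lam vV1; ring.
    by rewrite /lam uV1; ring.
  move=> hok lam lameff lamdeg.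
  pose mu := contr_div v U lam.
  have mueff : effectiveW V1 mu.
    move=> u _; rewrite /mu /contr_div; case: eqP => _.
      by apply: sumr_ge0 => w _; apply: lameff.
    exact: lameff.
  have mudeg : deg_div V1 mu = r.
    rewrite -lamdeg /deg_div (sum_split2 _ hd) (big_setD1 _ vV1) /= addrC.
    rewrite /mu /contr_div eqxx; congr (_ + _).
    by apply: eq_bigr => u; rewrite !inE => /andP[/negbTE -> _].
  apply: (key_A me hd hcyc); apply: (Leff_ext _ (hok mu mueff mudeg)) => u _; rewrite /f1 /mu /sub_div /contr_div /eps.
  case: (boolP (u == v)) => huv.
    rewrite sumrB; ring.
  ring.
split.
  case=> [[hn ->]|[hl [r0 [hok hmax]]]].
    by left; split => //; rewrite -hL.
  right; split; first by rewrite -hL.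
  split=> //; split; first by rewrite -hR.
  by move=> r' r'0 /hR; apply: hmax.
case=> [[hn ->]|[hl [r0 [hok hmax]]]].
  by left; split => //; rewrite hL.
right; split; first by rewrite hL.
split=> //; split; first by rewrite hR.
by move=> r' r'0 /hR; apply: hmax.
Qed.

Lemma cycle_deg1 (V : finType) (e : V -> V -> nat) (W : {set V}) :
  multigraph e -> is_cycleW e W ->
  forall b : divisor V, deg_div W b = 1 -> L_effective e W b.
Proof.
move=> me hc; have [n [c [n2 cW csurj cinj hedge]]] := cycle_order me hc.
have [_ _ hdeg] := hc.
exact: (cycle_alg me n2 cW csurj cinj hdeg hedge).
Qed.

Theorem mainTheorem4 (V : finType) (e : V -> V -> nat) (v : V)
  (V1 U : {set V}) (f : divisor V) :
  multigraph e ->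
  connectedW e [set: V] ->
  cut_vertex e v ->
  decomposes e v V1 U ->
  is_cycleW e U ->
  bad e U (zero_div v U f) ->
  forall r : int,
    is_rank e [set: V] f r <->
    is_rank e V1 (sub_div (contr_div v U f) (eps v)) r.
Proof.
move=> me _ _ hd hc hbad.
exact: (main_from_cycle me hd (cycle_deg1 me hc) hbad).
Qed.
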